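(* Let $\sigma>0$, $\bar\gamma>0$, $c_\infty\ge0$, and let $\kappa:[0,\infty)\to\mathbb{R}$ be $L_\kappa$-Lipschitz with $\kappa(0)=0$; set $\tau_\gamma(w)=w+\gamma\kappa(w)$. Let $(\gamma_n)\subset(0,\bar\gamma]$ with $\gamma_n\to0$, $w_0\ge0$, let $(W^{(n)}_k)_k$ be the Markov chain with $W^{(n)}_0=w_0$ and kernel $Q_{\gamma_n}$, where $$Q_\gamma(w,A)=\delta_0(A)\int_{\mathbb{R}}\bar p_{\sigma^2\gamma}(\tau_\gamma(w)+\gamma c_\infty,g)\varphi(g)dg+\int_{\mathbb{R}}\mathbb{1}_A(\tau_\gamma(w)+\gamma c_\infty-2\sigma\gamma^{1/2}g)\{1-\bar p_{\sigma^2\gamma}(\tau_\gamma(w)+\gamma c_\infty,g)\}\varphi(g)dg,$$ $\bar p_{\sigma^2\gamma}(a,g)=1\wedge\varphi_{\sigma^2\gamma}(a-\sigma\sqrt\gamma g)/\varphi_{\sigma^2\gamma}(\sigma\sqrt\gamma g)$, and let $\mu_n$ be the law on $\mathbb W=C([0,\infty),\mathbb{R})$ (uniform topology on compacts) of the linear interpolation $\mathbf W^{(n)}_t=W^{(n)}_{\lfloor t/\gamma_n\rfloor}+\{W^{(n)}_{\lceil t/\gamma_n\rceil}-W^{(n)}_{\lfloor t/\gamma_n\rfloor}\}\{t/\gamma_n-\lfloor t/\gamma_n\rfloor\}$. Let $\mu_\infty$ be a limit point (for convergence in distribution) of $(\mu_n)_{n\in\mathbb{N}}$. Then $\mu_\infty$-almost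 everywhere, $\inf_{t\in[0,\infty)}\mathrm W_t\ge0$, where $(\mathrm W_t)$ is the canonical process on $\mathbb W$.
   Context: $\varphi$ is the standard normal density and $\varphi_s(t)=(2\pi s)^{-1/2}e^{-t^2/(2s)}$. *)

(* Defs.v *)
From HB Require Import structures.
From mathcomp Require Import all_boot all_order all_algebra.
From mathcomp Require Import all_classical all_reals all_analysis.
Set Implicit Arguments. Unset Strict Implicit. Unset Printing Implicit Defensive.
Import Order.TTheory GRing.Theory Num.Theory.
Import numFieldNormedType.Exports.
Local Open Scope classical_set_scope.
Local Open Scope ring_scope.

Section Defs.
Variable R : realType.

Definition phis (s t : R) : R :=
  (Num.sqrt (2 * pi * s))^-1 * expR (- (t ^+ 2) / (2 * s)).

Definition phi (t : R) : R := phis 1 t.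

Definition tau (kappa : R -> R) (gamma w : R) : R := w + gamma * kappa w.

Definition pbar (sigma gamma a g : R) : R :=
  Num.min 1 (phis (sigma ^+ 2 * gamma) (a - sigma * Num.sqrt gamma * g)
             / phis (sigma ^+ 2 * gamma) (sigma * Num.sqrt gamma * g)).

Definition Qker (sigma cinf : R) (kappa : R -> R) (gamma w : R) (A : set R)
    : \bar R :=
  let a := tau kappa gamma w + gamma * cinf in
  ((\1_A (0 : R))%:E *
     \int[lebesgue_measure]_(g in [set: R]) (pbar sigma gamma a g * phi g)%:E
   + \int[lebesgue_measure]_(g in [set: R])
       (\1_A (a - 2 * sigma * Num.sqrt gamma * g)
        * (1 - pbar sigma gamma a g) * phi g)%:E)%E.

(* (W k)_k is, under P, a Markov chain started at w0 with kernel Q, stated via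
   its finite-dimensional distributions. *)
Definition markov_chain_from {d} {Omega : measurableType d}
    (P : probability Omega R) (Q : R -> set R -> \bar R) (w0 : R)
    (W : nat -> Omega -> R) : Prop :=
  (forall k, measurable_fun [set: Omega] (W k)) /\
  (forall A : set R, measurable A -> P (W 0%N @^-1` A) = (\1_A w0)%:E) /\
  (forall (k : nat) (A : nat -> set R), (forall i, measurable (A i)) ->
     P (\bigcap_(i < k.+2) (W i @^-1` A i)) =
     (\int[P]_(x in \bigcap_(i < k.+1) (W i @^-1` A i)) Q (W k x) (A k.+1))%E).

Definition interp (gamma : R) (u : nat -> R) (t : R) : R :=
  let fl := `|Num.floor (t / gamma)|%N in
  let ce := `|Num.ceil (t / gamma)|%N in
  u fl + (u ce - u fl) * (t / gamma - (Num.floor (t / gamma))%:~R).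

(* f is an element of W = C([0, oo), R) (values at t < 0 are irrelevant) *)
Definition cpath (f : R -> R) : Prop := {within `[0, +oo[, continuous f}.

(* F is a bounded continuous functional on C([0,oo),R) equipped with the
   topology of uniform convergence on compacts of [0,oo). *)
Definition bounded_cont_functional (F : (R -> R) -> R) : Prop :=
  (exists M : R, forall f, cpath f -> `|F f| <= M) /\
  (forall f, cpath f -> forall eps : R, 0 < eps ->
     exists T : R, exists delta : R, 0 < T /\ 0 < delta /\
       forall g, cpath g ->
         (forall t, 0 <= t <= T -> `|f t - g t| < delta) ->
         `|F f - F g| < eps).

End Defs.

(* Main.v *)
Require Import Defs.
From HB Require Import structures.
From mathcomp Require Import all_boot all_order all_algebra.
From mathcomp Require Import all_classical all_reals all_analysis.
From mathcomp Require Import measurable_realfun.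
From mathcomp Require Import ring lra.
Import Order.TTheory GRing.Theory Num.Theory.
Import numFieldNormedType.Exports.
Local Open Scope classical_set_scope.
Local Open Scope ring_scope.

Section H.
Context {R : realType}.

Definition hh (y : R) : R := Num.min 1 (Num.max 0 (- y)).

Lemma hh_cases y : (0 <= y /\ hh y = 0) \/ (y < 0 /\ -1 <= y /\ hh y = - y) \/ (y < -1 /\ hh y = 1).
Proof.
rewrite /hh; case: (leP 0 y) => Hy.
  left; split => //; rewrite (_ : Num.max 0 (-y) = 0); first by rewrite minEge ler01.
  by apply/max_idPl; rewrite oppr_le0.
right; rewrite (_ : Num.max 0 (-y) = -y); last by apply/max_idPr; rewrite oppr_ge0 ltW.
case: (leP (-1) y) => H1.
  by left; split => //; split => //; apply/min_idPr; rewrite lerNl.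
by right; split => //; apply/min_idPl; rewrite lerNr ltW.
Qed.

Lemma hh_ge0 y : 0 <= hh y.
Proof. by case: (hh_cases y) => [[_ ->]|[[H1 [H2 ->]]|[_ ->]]] //; lra. Qed.

Lemma hh_le1 y : hh y <= 1.
Proof. by case: (hh_cases y) => [[_ ->]|[[H1 [H2 ->]]|[_ ->]]] //; lra. Qed.

Lemma hh_eq0 y : hh y = 0 -> 0 <= y.
Proof. by case: (hh_cases y) => [[? _]|[[H1 [H2 ->]]|[_ ->]]] //; lra. Qed.

Lemma hh_lip a b : `|hh a - hh b| <= `|a - b|.
Proof.
have h1 := ler_norm (a - b).
have h2 : b - a <= `|a - b| by rewrite distrC ler_norm.
rewrite ler_norml; apply/andP; split;
case: (hh_cases a) => [[Ha ->]|[[Ha [Ha' ->]]|[Ha ->]]];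
case: (hh_cases b) => [[Hb ->]|[[Hb [Hb' ->]]|[Hb ->]]]; lra.
Qed.


Lemma hh_bcf (t : R) : 0 <= t -> bounded_cont_functional (fun f : R -> R => hh (f t)).
Proof.
move=> t0; split.
  by exists 1 => f _; rewrite ger0_norm ?hh_ge0 ?hh_le1.
move=> f _ eps eps0; exists (t + 1), eps; split; first lra.
split => // g _ Hg.
apply: (le_lt_trans (hh_lip _ _)); apply: Hg; apply/andP; split => //; lra.
Qed.

Lemma phis_gt0 (s x : R) : 0 < s -> 0 < phis s x.
Proof.
move=> s0; rewrite /phis; apply: mulr_gt0; last exact: expR_gt0.
by rewrite invr_gt0 sqrtr_gt0; apply: mulr_gt0 => //; apply: mulr_gt0 => //; exact: pi_gt0.
Qed.

Lemma Q_neg (sigma cinf : R) (kappa : R -> R) (gamma w : R) :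
  0 < sigma -> 0 < gamma -> 0 <= tau kappa gamma w + gamma * cinf ->
  Qker sigma cinf kappa gamma w [set x | x < 0] = 0%E.
Proof.
move=> s0 g0; rewrite /Qker /=; set a := tau kappa gamma w + gamma * cinf => a0.
rewrite indicE memNset /=; last by rewrite ltxx.
rewrite mul0e add0e; apply: integral0_eq => g _.
have -> : \1_[set x | x < 0] (a - 2 * sigma * Num.sqrt gamma * g) *
   (1 - pbar sigma gamma a g) * phi g = 0; last by [].
set x := sigma * Num.sqrt gamma * g.
have -> : 2 * sigma * Num.sqrt gamma * g = 2 * x by rewrite /x; ring.
case: (ltP (a - 2 * x) 0) => Hax; last first.
  by rewrite indicE memNset ?mul0r //= => /(le_lt_trans Hax); rewrite ltxx.
suff -> : pbar sigma gamma a g = 1 by rewrite subrr mulr0 mul0r.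
have sg0 : 0 < sigma ^+ 2 * gamma by apply: mulr_gt0 => //; exact: exprn_gt0.
rewrite /pbar -/x; apply/min_idPl; rewrite ler_pdivlMr ?phis_gt0 // mul1r.
rewrite /phis; apply: ler_wpM2l; first by rewrite invr_ge0 sqrtr_ge0.
rewrite ler_expR; rewrite !mulNr; rewrite lerN2; apply: ler_wpM2r.
  by rewrite invr_ge0; apply: mulr_ge0 => //; exact: ltW.
have : 0 <= a * (2 * x - a) by apply: mulr_ge0 => //; lra.
rewrite !expr2; nra.
Qed.

Lemma interp_ge0 (gamma : R) (u : nat -> R) t :
  0 <= u `|Num.floor (t / gamma)|%N -> 0 <= u `|Num.ceil (t / gamma)|%N ->
  0 <= interp gamma u t.
Proof.
rewrite /interp /=; move: (u _) (u _) => A B hA hB.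
have h1 : 0 <= t / gamma - (Num.floor (t / gamma))%:~R by rewrite subr_ge0 floor_le.
have h2 : t / gamma - (Num.floor (t / gamma))%:~R <= 1.
  have := floorD1_gt (t / gamma); rewrite intrD rmorph1; lra.
move: h1 h2; set th := _ - _ => h1 h2.
have := mulr_ge0 hA (_ : 0 <= 1 - th); have := mulr_ge0 hB h1.
move=> H1 H2; have {H2} H2 := H2 ltac:(lra). nra.
Qed.

Lemma measurable_neg : measurable [set x : R | x < 0].
Proof.
rewrite (_ : [set x : R | x < 0] = `]-oo, 0[%classic); first exact: measurable_itv.
by apply/seteqP; split => x /=; rewrite in_itv.
Qed.

Lemma measurable_nonneg : measurable [set x : R | 0 <= x].
Proof.
rewrite (_ : [set x : R | 0 <= x] = ~` [set x : R | x < 0]).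
  apply: measurableC; exact: measurable_neg.
by apply/seteqP; split => x /=; rewrite leNgt => /negP.
Qed.

Lemma a_ge0 (kappa : R -> R) (Lk cinf gamma w : R)
  (hLip : forall x y : R, 0 <= x -> 0 <= y -> `|kappa x - kappa y| <= Lk * `|x - y|)
  (hk0 : kappa 0 = 0) : 0 <= cinf -> 0 < gamma -> gamma * Lk <= 1 -> 0 <= w ->
  0 <= tau kappa gamma w + gamma * cinf.
Proof.
move=> c0 g0 gL w0; have := hLip w 0 w0 (lexx 0).
rewrite hk0 subr0 subr0 (ger0_norm w0) => Hk.
have Hk' : - kappa w <= Lk * w by apply: le_trans Hk; rewrite -normrN ler_norm.
have e1 : 0 <= gamma * (kappa w + Lk * w) by apply: mulr_ge0; lra.
have e2 : 0 <= w * (1 - gamma * Lk) by apply: mulr_ge0; lra.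
have e3 : 0 <= gamma * cinf by apply: mulr_ge0; lra.
rewrite /tau; nra.
Qed.

Lemma chain_neg {d} {Om : measurableType d} (P : probability Om R)
  (sigma cinf Lk gamma w0 : R) (kappa : R -> R) (W : nat -> Om -> R)
  (hLip : forall x y : R, 0 <= x -> 0 <= y -> `|kappa x - kappa y| <= Lk * `|x - y|)
  (hk0 : kappa 0 = 0) : 0 < sigma -> 0 <= cinf -> 0 < gamma -> gamma * Lk <= 1 ->
  0 <= w0 -> markov_chain_from P (Qker sigma cinf kappa gamma) w0 W ->
  forall k, P.-negligible [set x | W k x < 0].
Proof.
move=> s0 c0 g0 gL hw0 [hW [h0 hM]].
have mpre : forall k A, measurable A -> measurable (W k @^-1` A).
  by move=> k A mA; have := hW k measurableT A mA; rewrite setTI.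
suff : forall k, P.-negligible [set x | exists i, (i <= k)%N /\ W i x < 0].
  by move=> H k; apply: negligibleS (H k) => x /= hx; exists k.
elim => [|k IH].
  apply: (negligibleS (A := W 0%N @^-1` [set x | x < 0])).
    by move=> x /= [i [+ hi]]; rewrite leqn0 => /eqP Hi; rewrite -Hi.
  apply/negligibleP; first by apply: mpre; exact: measurable_neg.
  transitivity ((@indic _ R [set x : R | x < 0] w0)%:E); first exact: h0 measurable_neg.
  by rewrite indicE memNset //= ltNge hw0.
pose A := fun i : nat => if (i <= k)%N then [set x : R | 0 <= x] else [set x | x < 0].
have mA : forall i, measurable (A i).
  by move=> i; rewrite /A; case: ifP => _; [exact: measurable_nonneg|exact: measurable_neg].
pose B := \bigcap_(i < k.+2) (W i @^-1` A i).
have mB : measurable B.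
  by apply: bigcap_measurableType => i _; exact: mpre.
have nB : P.-negligible B.
  apply/negligibleP => //.
  transitivity (\int[P]_(x in \bigcap_(i < k.+1) W i @^-1` A i) Qker sigma cinf kappa gamma (W k x) (A k.+1))%E; first exact: hM.
  apply: integral0_eq => x Hx.
  rewrite /A ltnn; apply: Q_neg => //; apply: (@a_ge0 kappa Lk) => //.
  by have := Hx k (ltnSn k); rewrite /= /A leqnn.
apply: (negligibleS (A := [set x | exists i, (i <= k)%N /\ W i x < 0] `|` B)); last first.
  exact: negligibleU.
move=> x /= [i [hi Hi]].
case: (pselect (exists i, (i <= k)%N /\ W i x < 0)) => [H|H]; first by left.
right => j /= hj; rewrite /A; case: ifP => hjk.
  by rewrite /= leNgt; apply/negP => Hj; apply: H; exists j.
have -> : j = k.+1 by apply/eqP; rewrite eqn_leq -ltnS hj ltnNge hjk.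
have : i = k.+1.
  apply/eqP; rewrite eqn_leq hi /= ltnNge; apply/negP => hik; apply: H; exists i.
  by split.
by move=> <-.
Qed.

Lemma meas_hh_comp {d} {Om : measurableType d} (g : Om -> R) :
  measurable_fun [set: Om] g -> measurable_fun [set: Om] (fun x => hh (g x)).
Proof.
move=> mg.
have -> : (fun x => hh (g x)) = (cst 1) \min ((cst 0) \max (\- g)) by [].
apply: measurable_minr; first exact: measurable_cst.
apply: measurable_maxr; first exact: measurable_cst.
exact: measurable_funN.
Qed.

Lemma meas_interp {d} {Om : measurableType d} (W : nat -> Om -> R) gamma t :
  (forall k, measurable_fun [set: Om] (W k)) ->
  measurable_fun [set: Om] (fun x => interp gamma (fun k => W k x) t).
Proof.
move=> mW; rewrite /interp /=.
apply: measurable_funD; first exact: mW.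
apply: measurable_funM; last exact: measurable_cst.
exact: measurable_funB.
Qed.

End H.

Theorem proposition43 (R : realType)
  (sigma gbar cinf Lk : R) (kappa : R -> R)
  (hsigma : 0 < sigma) (hgbar : 0 < gbar) (hcinf : 0 <= cinf)
  (hLip : forall x y : R, 0 <= x -> 0 <= y -> `|kappa x - kappa y| <= Lk * `|x - y|)
  (hk0 : kappa 0 = 0)
  (gam : nat -> R) (hgam : forall n, 0 < gam n <= gbar)
  (hgam0 : gam @ \oo --> (0 : R))
  (w0 : R) (hw0 : 0 <= w0)
  (dn : nat -> measure_display) (Omn : forall n, measurableType (dn n))
  (Pn : forall n, probability (Omn n) R)
  (Wn : forall n, nat -> Omn n -> R)
  (hchain : forall n, markov_chain_from (Pn n) (Qker sigma cinf kappa (gam n)) w0 (Wn n))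
  (d : measure_display) (Om : measurableType d) (P : probability Om R)
  (X : Om -> R -> R)
  (hXmeas : forall t, measurable_fun [set: Om] (fun om => X om t))
  (hXcont : forall om, cpath (X om))
  (hlim : exists phi_ : nat -> nat, {homo phi_ : m n / (m < n)%N >-> (m < n)%N} /\
     forall F : (R -> R) -> R, bounded_cont_functional F ->
       ((fun n => \int[Pn (phi_ n)]_(x in [set: Omn (phi_ n)])
                   (F (interp (gam (phi_ n)) (fun k => Wn (phi_ n) k x)))%:E)
       @ \oo --> \int[P]_(x in [set: Om]) (F (X x))%:E)%E) :
  {ae P, forall om, forall t : R, 0 <= t -> 0 <= X om t}.
Proof.
have [phi_ [hphi hconv]] := hlim.
have phi_ge : forall n, (n <= phi_ n)%N.
  elim => // n IH; have := hphi n n.+1 (ltnSn n).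
  by move=> /(leq_ltn_trans IH).
have [N _ HN] : \forall n \near \oo, gam n * Lk <= 1.
  have e0 : 0 < (`|Lk| + 1)^-1 by rewrite invr_gt0; have := normr_ge0 Lk; lra.
  have [N0 _ HN0] := cvgr0_norm_lt gam hgam0 _ e0.
  exists N0 => // n Hn0.
  have /= Hn := HN0 n Hn0.
  have /andP [g0 _] := hgam n.
  rewrite ger0_norm ?(ltW g0) // in Hn.
  have : gam n * (`|Lk| + 1) < 1.
    by rewrite -ltr_pdivlMr //; have := normr_ge0 Lk; lra.
  have := ler_norm Lk; nra.
have key : forall t, 0 <= t -> \forall om \ae P, 0 <= X om t.
  move=> t t0.
  have hF := hconv _ (@hh_bcf _ t t0).
  have ev : \forall n \near \oo, 0%E = (\int[Pn (phi_ n)]_(x in [set: Omn (phi_ n)])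
        (hh (interp (gam (phi_ n)) (fun k => Wn (phi_ n) k x) t))%:E)%E.
    exists N => // n /= Hn.
    set m := phi_ n.
    have gL : gam m * Lk <= 1 by apply: HN; apply: leq_trans Hn (phi_ge n).
    have /andP [g0 _] := hgam m.
    have hneg := @chain_neg _ _ _ (Pn m) sigma cinf Lk (gam m) w0 kappa (Wn m) hLip hk0 hsigma hcinf g0 gL hw0 (hchain m).
    have [hW _] := hchain m.
    rewrite (ae_eq_integral (cst 0%E)) ?integral0 //.
    - apply/measurable_EFinP; apply: meas_hh_comp; exact: meas_interp.

    apply: negligibleS (negligibleU (hneg `|Num.floor (t / gam m)|%N)
                                   (hneg `|Num.ceil (t / gam m)|%N)).
    move=> x /= Hx; apply: contrapT => Hc; apply: Hx => _.
    have [Ha Hb] : ~ (Wn m `|Num.floor (t / gam m)|%N x < 0) /\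
                   ~ (Wn m `|Num.ceil (t / gam m)|%N x < 0).
      by split => H; apply: Hc; [left|right].
    have := @interp_ge0 _ (gam m) (fun k => Wn m k x) t.
    rewrite /= !leNgt; move=> /(_ (introN idP Ha) (introN idP Hb)) Hi.
    case: (hh_cases (interp (gam m) (fun k => Wn m k x) t)) => [[_ ->]//|].
    by rewrite -leNgt in Hi; case=> -[H1 _]; exfalso; lra.
  have h0 : ((fun n => \int[Pn (phi_ n)]_(x in [set: Omn (phi_ n)])
        (hh (interp (gam (phi_ n)) (fun k => Wn (phi_ n) k x) t))%:E)%E @ \oo --> 0%E).
    exact: cvg_trans (near_eq_cvg ev) (cvg_cst _).
  have lim0 := cvg_unique (@ereal_hausdorff R) hF h0.
  have mf : measurable_fun [set: Om] (fun x => (hh (X x t))%:E).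
    by apply/measurable_EFinP; apply: meas_hh_comp.
  have := (ae_eq_integral_abs P measurableT mf).1.
  have -> : (\int[P]_(x in [set: Om]) `|(hh (X x t))%:E|)%E = 0%E.
    rewrite -lim0; apply: eq_integral => x _; rewrite gee0_abs // lee_fin; exact: hh_ge0.
  move=> /(_ erefl) H0; apply: filterS H0 => x Hx; apply: hh_eq0; apply: EFin_inj; exact: Hx I.
have key2 : \forall om \ae P, forall m n : nat, 0 <= X om (n%:R / m.+1%:R).
  apply: ae_foralln => m; apply: ae_foralln => n; apply: key.
  by apply: divr_ge0.
apply: filterS key2 => om H t t0.
rewrite leNgt; apply/negP => Hlt.
have tA : `[0, +oo[%classic t by rewrite /= in_itv /= andbT.
have hc := (subspace_continuousP _ _).1 (hXcont om) t tA.
have Hw : \forall s \near within `[0, +oo[%classic (nbhs t), X om s < 0.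
  exact: (cvgr_lt _ hc _ Hlt).
move: Hw; rewrite /within /= => /nbhs_ballP [e /= e0 He].
set m := Num.truncn e^-1.
set M : R := m.+1%:R.
have M0 : 0 < M by rewrite /M ltr0n.
have eM : 1 < e * M.
  have := truncnS_gt e^-1; rewrite -/m -/M => HM.
  have : e * e^-1 < e * M by rewrite ltr_pM2l.
  by rewrite mulfV ?gt_eqF.
set n := (Num.truncn (t * M)).+1.
have tM0 : 0 <= t * M by apply: mulr_ge0 => //; exact: ltW.
have h1 : t * M < n%:R by exact: truncnS_gt.
have h2 : n%:R <= t * M + 1.
  by rewrite /n -addn1 natrD lerD2r truncn_le.
set s := n%:R / M.
have hs : s * M = n%:R by rewrite /s mulfVK // gt_eqF.
have hst : t < s by rewrite -(ltr_pM2r M0) hs.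
have hse : s - t < e by nra.
have := He s; rewrite /ball /= => /(_ _ _).
have Hb : `|t - s| < e by rewrite distrC ger0_norm //; lra.
move=> /(_ Hb); rewrite /= in_itv /= andbT => /(_ _).
have s0 : 0 <= s by lra.
move=> /(_ s0) Hs.
by have := H m n; rewrite -/M -/s leNgt Hs.
Qed.
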